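(* Let $n$ be an even positive integer and let $\mathbb{F}$ be a field with $\operatorname{char}(\mathbb{F})\neq 2$ and $|\mathbb{F}|\geq n^2+1$. Let $Q_n$ denote the set of all $n\times n$ skew-symmetric matrices over $\mathbb{F}$. Let $\psi:Q_n\to Q_n$ be a map, and let $\chi$ be a map from the set of all invertible matrices in $Q_n$ into $Q_n$. If $\operatorname{tr}(xy)=\operatorname{tr}(\chi(x)\psi(y))$ for every invertible $x\in Q_n$ and every $y\in Q_n$, then $\psi$ is linear.
   Context: A matrix $x$ is skew-symmetric if $x^t=-x$. *)

(* Defs.v *)
From mathcomp Require Import all_boot all_order all_algebra.
Set Implicit Arguments. Unset Strict Implicit. Unset Printing Implicit Defensive.
Import GRing.Theory.
Local Open Scope ring_scope.

Definition skew_mx (F : fieldType) (n : nat) (x : 'M[F]_n) : Prop := x^T = - x.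

(* the field F has at least m elements (F may be infinite) *)
Definition card_ge (F : fieldType) (m : nat) : Prop :=
  exists s : seq F, uniq s /\ size s = m.

(* Main.v *)
Require Import Defs.
From mathcomp Require Import all_boot all_order all_algebra.
From mathcomp Require Import zify ring.
Set Implicit Arguments. Unset Strict Implicit. Unset Printing Implicit Defensive.
Import GRing.Theory.
Local Open Scope ring_scope.

Section Core.
Variables (F : fieldType) (N k : nat).

Lemma core (K P : 'M[F]_N) (A C : 'M[F]_(k, N))
  (hKA : (K <= A)%MS) (hPK : (P <= K)%MS)
  (hrel : A *m K^T = C *m P^T)
  (hnd : forall v : 'rV[F]_N, (v <= K)%MS -> K *m v^T = 0 -> v = 0) :
  forall z : 'rV[F]_N, (z <= K)%MS -> C *m z^T = 0 -> z = 0.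
Proof.
move=> z zK Cz.
have rKA : \rank (K *m A^T) = \rank K.
  have sub : (kermx (K *m A^T) <= kermx K)%MS.
    apply/row_subP => i; apply/sub_kermxP; apply: hnd; first exact: submxMl.
    have [D hD] := submxP hKA.
    have /sub_kermxP E := row_sub i (kermx (K *m A^T)).
    rewrite [X in X *m _]hD -mulmxA.
    have -> : A *m (row i (kermx (K *m A^T)) *m K)^T = 0.
      by apply: trmx_inj; rewrite trmx0 trmx_mul trmxK -mulmxA E.
    by rewrite mulmx0.
  have := mxrankS sub; rewrite !mxrank_ker.
  have := mxrankM_maxl K A^T; have := rank_leq_row K. lia.
have eKP : K *m A^T = P *m C^T by rewrite -(trmxK (P *m C^T)) trmx_mul trmxK -hrel trmx_mul trmxK.
have rP : \rank P = \rank K.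
  apply/eqP; rewrite eqn_leq mxrankS //=.
  by rewrite -rKA eKP mxrankM_maxl.
have rPC : \rank (P *m C^T) = \rank P by rewrite -eKP rKA rP.
have KP : (K <= P)%MS by have := mxrank_leqif_sup hPK; rewrite rP => -[_ <-].
have /submxP [c hc] := submx_trans zK KP.
rewrite hc in Cz *.
have kerPC : (c <= kermx (P *m C^T))%MS.
  apply/sub_kermxP; rewrite mulmxA -(trmxK (c *m P *m C^T)) trmx_mul trmxK.
  by rewrite Cz trmx0.
have keq : (kermx (P *m C^T) <= kermx P)%MS.
  have sub : (kermx P <= kermx (P *m C^T))%MS.
    by apply/sub_kermxP; rewrite mulmxA mulmx_ker mul0mx.
  by have := mxrank_leqif_sup sub; rewrite !mxrank_ker rPC => -[_ <-].
by apply/sub_kermxP; apply: submx_trans keq.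
Qed.
End Core.

Section Mx.
Variables (F : fieldType) (n : nat).
Implicit Types x y z : 'M[F]_n.

Definition Ksk := kermx (lin_mx (@trmx F n n) + 1%:M).

Lemma skewK x : (mxvec x <= Ksk)%MS <-> skew_mx x.
Proof.
rewrite /Ksk /skew_mx sub_kermx mulmxDr mul_vec_lin mulmx1 -linearD /=.
split => [/eqP h| h].
  apply/eqP; rewrite -addr_eq0; apply/eqP.
  by rewrite -(mxvecK (x^T + x)) h linear0.
by rewrite h addNr linear0.
Qed.

Lemma vskew (v : 'rV[F]_(n * n)) : (v <= Ksk)%MS -> skew_mx (vec_mx v).
Proof. by move=> h; apply/skewK; rewrite vec_mxK. Qed.

Lemma dot_delta p q z : (mxvec (delta_mx p q) *m (mxvec z)^T) 0 0 = z p q.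
Proof.
have -> : delta_mx p q = (delta_mx (0 : 'I_1) p)^T *m delta_mx (0 : 'I_1) q :> 'M[F]_n.
  by rewrite trmx_delta mul_delta_mx.
rewrite mxvec_dotmul -rowE trmx_delta -colE !mxE //.
Qed.

Lemma dotE x y : (mxvec x *m (mxvec y)^T) 0 0 = \sum_i \sum_j x i j * y i j.
Proof.
rewrite [in LHS](matrix_sum_delta x) linear_sum mulmx_suml summxE.
apply: eq_bigr => i _; rewrite linear_sum mulmx_suml summxE.
by apply: eq_bigr => j _; rewrite linearZ -scalemxAl mxE dot_delta.
Qed.

Lemma trE x y : skew_mx y -> \tr (x *m y) = - ((mxvec x *m (mxvec y)^T) 0 0).
Proof.
move=> hy; rewrite dotE /mxtrace -sumrN; apply: eq_bigr => i _.
rewrite mxE -sumrN; apply: eq_bigr => j _.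
have : y^T i j = (- y) i j by rewrite hy.
by rewrite !mxE => ->; rewrite mulrN.
Qed.

Lemma nondeg (v : 'rV[F]_(n * n)) :
  (v <= Ksk)%MS -> Ksk *m v^T = 0 -> (2%:R : F) != 0 -> v = 0.
Proof.
move=> vK h h2; have zs := vskew vK.
move: h vK zs; rewrite -(vec_mxK v); move: (vec_mx v) => z h _ zs; rewrite mxvecK in zs.
suff -> : z = 0 by rewrite linear0.
apply/matrixP => p q; rewrite [RHS]mxE.
have us : skew_mx (delta_mx p q - delta_mx q p : 'M[F]_n).
  by rewrite /skew_mx linearB /= !trmx_delta opprB.
have /submxP [r hr] := proj2 (skewK _) us.
have : (mxvec (delta_mx p q - delta_mx q p) *m (mxvec z)^T) 0 0 = 0.
  by rewrite hr -mulmxA h mulmx0 mxE.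
rewrite linearB /= mulmxBl mxE [X in _ + X = _]mxE !dot_delta.
have : z^T p q = (- z) p q by rewrite zs.
rewrite !mxE => ->; rewrite opprK => /eqP.
by rewrite -mulr2n -mulr_natr mulf_eq0 (negbTE h2) orbF => /eqP.
Qed.

End Mx.

Section J.
Variables (F : fieldType) (n m : nat).
Hypothesis hnm : n = (m + m)%N.
Hypothesis hm : (0 < m)%N.

Definition Jm : 'M[F]_n :=
  \matrix_(i, j) (if (i + m == j)%N then 1 else if (j + m == i)%N then -1 else 0).

Lemma J_skew : skew_mx Jm.
Proof.
apply/matrixP => i j; rewrite !mxE.
do !case: eqP => ? //=; try (exfalso; lia); ring.
Qed.

Lemma JJ : Jm *m Jm = - 1%:M.
Proof.
apply/matrixP => i k; rewrite !mxE.
have hi := ltn_ord i.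
have [j0 hj0] : exists j0 : 'I_n, nat_of_ord j0 = (if (i < m)%N then i + m else i - m)%N.
  have h : ((if (i < m)%N then i + m else i - m) < n)%N.
    by case: (ltnP i m) => ?; lia.
  by exists (Ordinal h).
rewrite (bigD1 j0) //= big1 ?addr0.
  rewrite !mxE -val_eqE /= hj0.
  have hk := ltn_ord k.
  case: (ltnP i m) => him; do !case: eqP => ? //=; try (exfalso; lia); ring.
move=> j hne; have hne' : nat_of_ord j <> nat_of_ord j0 by move=> e; move/eqP: hne; apply; apply: val_inj.
rewrite !mxE; rewrite hj0 in hne'.
have hj := ltn_ord j.
move: hne'; case: (ltnP i m) => him hne'; do !case: eqP => ? //=; try (exfalso; lia); ring.
Qed.

Lemma J_unit : Jm \in unitmx.
Proof.
have : Jm *m (- Jm) = 1%:M by rewrite mulmxN JJ opprK.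
by case/mulmx1_unit.
Qed.

End J.

Lemma good_s (F : fieldType) (n : nat) (hn : (2 <= n)%N) (hcard : card_ge F (n ^ 2 + 1)%N)
  (M : 'M[F]_n) : exists s : F, (s != 0) && (s%:M - M \in unitmx).
Proof.
case: hcard => l [ul sl].
set l' := filter (predC (pred1 0)) l.
have sz : (n < size l')%N.
  rewrite /l' size_filter.
  have h1 := count_predC (pred1 0) l.
  rewrite (count_uniq_mem _ ul) in h1.
  have : (n < n ^ 2)%N by rewrite expnS expn1; nia.
  move: h1; case: (_ \in _) => /= h1; lia.
have : has (fun s => ~~ root (char_poly M) s) l'.
  apply/negPn/negP; rewrite -all_predC => hall.
  have hall' : all (root (char_poly M)) l' by apply: sub_all hall => x /= /negPn.
  have := max_poly_roots (monic_neq0 (char_poly_monic M)) hall' (filter_uniq _ ul).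
  by rewrite size_char_poly ltnNge sz.
case/hasP => s; rewrite mem_filter => /andP [/= s0 _] nr.
exists s; rewrite s0 /=.
apply: contraR nr => nu; rewrite -eigenvalue_root_char; apply/eigenvalueP.
move: nu; rewrite unitmxE unitfE negbK => /det0P [v v0 hv].
exists v => //.
by move: hv; rewrite mulmxBr mul_mx_scalar => /eqP; rewrite subr_eq0 => /eqP <-.
Qed.

Lemma pairE (F : fieldType) (N p q : nat) (X : 'M[F]_(p, N)) (Y : 'M[F]_(q, N)) i j :
  (X *m Y^T) i j = (row i X *m (row j Y)^T) 0 0.
Proof. by rewrite !mxE; apply: eq_bigr => k _; rewrite !mxE. Qed.

Theorem lemma2p5 (F : fieldType) (n : nat)
  (hn_pos : (0 < n)%N) (hn_even : ~~ odd n)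
  (hchar : (2%:R : F) != 0)
  (hcard : card_ge F (n ^ 2 + 1)%N)
  (psi chi : 'M[F]_n -> 'M[F]_n)
  (hpsi : forall y : 'M[F]_n, skew_mx y -> skew_mx (psi y))
  (hchi : forall x : 'M[F]_n, skew_mx x -> x \in unitmx -> skew_mx (chi x))
  (htr : forall x y : 'M[F]_n, skew_mx x -> x \in unitmx -> skew_mx y ->
           \tr (x *m y) = \tr (chi x *m psi y)) :
  forall (a : F) (x y : 'M[F]_n), skew_mx x -> skew_mx y ->
    psi (a *: x + y) = a *: psi x + psi y.
Proof.
move=> a x y hx hy.
have [m [hnm hm0]] : exists m, n = (m + m)%N /\ (0 < m)%N.
  exists n./2; have := odd_double_half n; rewrite (negbTE hn_even) add0n -addnn => h.
  split; first by rewrite h.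
  lia.
have hn2 : (2 <= n)%N by lia.
set J := Jm F n m.
have Js : skew_mx J := @J_skew F n m hnm hm0.
have Ju : J \in unitmx := @J_unit F n m hnm hm0.
have JJ' : J *m J = - 1%:M := @JJ F n m hnm hm0.
have span : forall y0 : 'M[F]_n, exists s, (s != 0) && (s *: J + y0 \in unitmx).
  move=> y0; have [s /andP [s0 hs]] := good_s hn2 hcard (J *m y0).
  exists s; rewrite s0 /=.
  have <- : J *m (s%:M - J *m y0) = s *: J + y0.
    by rewrite mulmxBr mul_mx_scalar mulmxA JJ' mulNmx mul1mx opprK.
  by rewrite unitmx_mul Ju hs.
set K := @Ksk F n.
pose yv (j : 'I_(n * n)) := vec_mx (row j K).
have ys : forall j, skew_mx (yv j) := fun j => vskew (row_sub j K).
have /fin_all_exists [s hs] : forall j : 'I_(n * n), exists s, (s != 0) && (s *: J + yv j \in unitmx).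
  by move=> j; apply: span.
pose A1 : 'M[F]_(n * n, n * n) := \matrix_j mxvec (s j *: J + yv j).
pose A : 'M[F]_(n * n + 1, n * n) := col_mx A1 (mxvec J).
have rA1 : forall j, row (lshift 1 j) A = mxvec (s j *: J + yv j) by move=> j; rewrite rowKu rowK.
have rA2 : row (rshift (n * n) 0) A = mxvec J by rewrite rowKd row_id.
have hA : forall i, skew_mx (vec_mx (row i A)) /\ vec_mx (row i A) \in unitmx.
  move=> i; rewrite -(splitK i); case: (split i) => j /=.
    rewrite rA1 mxvecK; have /andP [_ ->] := hs j; split => //.
    by rewrite /skew_mx linearD linearZ /= Js (ys j) scalerN opprD.
  by rewrite (ord1 j) rA2 mxvecK.
have hKA : (K <= A)%MS.
  apply/row_subP => j.
  have -> : row j K = mxvec (s j *: J + yv j) + (- s j) *: mxvec J.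
    rewrite linearD linearZ /= [mxvec (yv j)]vec_mxK scaleNr addrAC subrr add0r.
    done.
  apply: addmx_sub; first by rewrite -rA1 row_sub.
  by apply: scalemx_sub; rewrite -rA2 row_sub.
pose P : 'M[F]_(n * n) := \matrix_j mxvec (psi (yv j)).
have hPK : (P <= K)%MS.
  by apply/row_subP => j; rewrite rowK; apply/skewK; apply: hpsi.
pose C : 'M[F]_(n * n + 1, n * n) := \matrix_i mxvec (chi (vec_mx (row i A))).
have rC : forall i, row i C = mxvec (chi (vec_mx (row i A))).
  by move=> i; rewrite /C rowK.
have rP : forall j, row j P = mxvec (psi (yv j)).
  by move=> j; rewrite /P rowK.
have dotT : forall u v : 'M[F]_n, skew_mx v -> (mxvec u *m (mxvec v)^T) 0 0 = - \tr (u *m v).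
  by move=> u v hv; rewrite trE // opprK.
have hrel : A *m K^T = C *m P^T.
  apply/matrixP => i j; rewrite (pairE A K) (pairE C P) rC rP.
  rewrite -[row i A]vec_mxK -[row j K]vec_mxK.
  have [hw1 hw2] := hA i.
  rewrite (dotT _ _ (ys j)) (dotT _ _ (hpsi _ (ys j))).
  by rewrite (htr _ _ hw1 hw2 (ys j)) mxvecK.
have hz := core hKA hPK hrel (fun v hv h => nondeg hv h hchar).
have hxy : skew_mx (a *: x + y) by rewrite /skew_mx linearD linearZ /= hx hy scalerN opprD.
set D := psi (a *: x + y) - a *: psi x - psi y.
have hD : skew_mx D.
  rewrite /skew_mx /D !linearB linearZ /= (hpsi _ hxy) (hpsi _ hx) (hpsi _ hy).
  by rewrite scalerN.
have : mxvec D = 0.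
  apply: hz; first by apply/skewK.
  apply/matrixP => i j; rewrite (ord1 j) (pairE C (mxvec D)) row_id rC [RHS]mxE.
  have [hw1 hw2] := hA i.
  rewrite (dotT _ _ hD) /D !mulmxBr -scalemxAr !linearB linearZ /=.
  rewrite -(htr _ _ hw1 hw2 hxy) -(htr _ _ hw1 hw2 hx) -(htr _ _ hw1 hw2 hy) mulmxDr -scalemxAr linearD linearZ /=.
  by rewrite addrAC addrK subrr oppr0.
move=> hD0; have : D = 0 by rewrite -(mxvecK D) hD0 linear0.
by move/eqP; rewrite /D -addrA -opprD subr_eq0 => /eqP.
Qed.
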